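(* Let $\mathbb{F}\in\{\mathbb{R},\mathbb{C}\}$, $A\in\mathbb{F}^{m\times n}$, $b\in\mathbb{F}^m$, $K\ge1$. Let $x'$ be a stationary point of $\mathcal{K}_{K,reg}$ with $\mathrm{card}(x')=K$, set $z'=(I-A^*A)x'+A^*b$, let $\tilde z'$ be the entries of $z'$ sorted by decreasing magnitude, and assume $$|\tilde z'_{K+1}|<(2\beta_{2K}^2-1)|\tilde z'_K|.$$ If $x''\neq x'$ is another stationary point of $\mathcal{K}_{K,reg}$, then $\mathrm{card}(x'')>K$.
   Context: $\mathrm{card}(x)$ is the number of nonzero entries, $P_K=\{x:\mathrm{card}(x)\le K\}$, $\iota_{P_K}$ its indicator function; $\beta_k=\inf\{\|Ax\|_2/\|x\|_2:x\ne0,\ \mathrm{card}(x)\le k\}$. $\mathcal{Q}_2(\iota_{P_K})$ is the function such that $\mathcal{Q}_2(\iota_{P_K})(x)+\|x\|^2$ is the lower semicontinuous convex envelope of $\iota_{P_K}(x)+\|x\|^2$; explicitly, with $\tilde x$ the entries of $x$ sorted so that $|\tilde x_j|$ is non-increasing, $\mathcal{Q}_2(\iota_{P_K})(x)=\frac{1}{k_*}\big(\sum_{j>K-k_*}|\tilde x_j|\big)^2-\sum_{j>K-k_*}|\tilde x_j|^2$, where $k_*$ is the largest $k\in\{1,\dots,K\}$ with $\sum_{j>K-k}|\tilde x_j|-k|\tilde x_{K+1-k}|\ge0$. $\mathcal{K}_{K,reg}(x)=\mathcal{Q}_2(\iota_{P_K})(x)+\|Ax-b\|_2^2$. $A^*$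 is the conjugate transpose. A stationary point of a function $g$ is a point $x$ with $0$ in the Fréchet subdifferential $\hat\partial g(x)$, i.e. the set of $v$ with $\liminf_{y\to x,y\ne x}(g(y)-g(x)-\mathrm{Re}\langle v,y-x\rangle)/\|y-x\|\ge0$. *)

(* Defs.v *)
From HB Require Import structures.
From mathcomp Require Import all_boot all_order all_algebra.
From mathcomp Require Import all_classical all_reals.
From mathcomp.real_closed Require Import complex.
Set Implicit Arguments. Unset Strict Implicit. Unset Printing Implicit Defensive.
Import Order.TTheory GRing.Theory Num.Theory.
Local Open Scope ring_scope.

(* Generic setting: scalars F (F = R or F = R[i]) with a conjugation [cj],  *)
(* a real-valued modulus [md] and a real part [re].  Vectors in F^n are     *)

Section Generic.
Variables (R : realType) (F : comNzRingType)
  (cj : F -> F) (md : F -> R) (re : F -> R).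

Definition card {n} (x : 'cV[F]_n) : nat := #|[set i | x i 0 != 0]|.

Definition sqnorm {n} (x : 'cV[F]_n) : R := \sum_(i < n) md (x i 0) ^+ 2.
Definition norm2 {n} (x : 'cV[F]_n) : R := Num.sqrt (sqnorm x).

Definition adj {m n} (A : 'M[F]_(m, n)) : 'M[F]_(n, m) := map_mx cj A^T.

Definition reinner {n} (v w : 'cV[F]_n) : R := re (\sum_(i < n) cj (v i 0) * w i 0).

(* magnitudes |x_i| sorted non-increasingly; (sortmag x)`_j = |x~_(j+1)|  *)
(* (0-indexed; padded with 0 beyond n)                                     *)
Definition sortmag {n} (x : 'cV[F]_n) : seq R :=
  sort (fun a b => b <= a) [seq md (x i 0) | i <- enum 'I_n].

(* |x~_j| with 1-based index j *)
Definition xt {n} (x : 'cV[F]_n) (j : nat) : R := nth 0 (sortmag x) j.-1.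

Definition kstar_cond {n} (K : nat) (x : 'cV[F]_n) (k : nat) : bool :=
  0 <= \sum_((K - k).+1 <= j < n.+1) xt x j - k%:R * xt x (K.+1 - k).

Definition kstar {n} (K : nat) (x : 'cV[F]_n) : nat :=
  \max_(k < K.+1 | (1 <= k)%N && kstar_cond K x k) k.

(* Q_2(iota_{P_K})(x), explicit formula *)
Definition Q2 {n} (K : nat) (x : 'cV[F]_n) : R :=
  let k := kstar K x in
  (k%:R)^-1 * (\sum_((K - k).+1 <= j < n.+1) xt x j) ^+ 2
  - \sum_((K - k).+1 <= j < n.+1) xt x j ^+ 2.

Definition Kreg {m n} (A : 'M[F]_(m, n)) (b : 'cV[F]_m) (K : nat)
  (x : 'cV[F]_n) : R := Q2 K x + sqnorm (A *m x - b).

(* Fréchet subdifferential: v \in hat-partial g(x) iff                      *)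
(* liminf_{y -> x, y <> x} (g y - g x - Re<v, y - x>) / ||y - x|| >= 0,    *)
(* written out with epsilon/delta.                                          *)
Definition frechet_subdiff {n} (g : 'cV[F]_n -> R) (x v : 'cV[F]_n) : Prop :=
  forall eps : R, 0 < eps -> exists2 delta : R, 0 < delta &
    forall y : 'cV[F]_n, 0 < norm2 (y - x) < delta ->
      - eps <= (g y - g x - reinner v (y - x)) / norm2 (y - x).

Definition stationary {n} (g : 'cV[F]_n -> R) (x : 'cV[F]_n) : Prop :=
  frechet_subdiff g x 0.

Definition beta {m n} (A : 'M[F]_(m, n)) (k : nat) : R :=
  inf [set r : R | exists x : 'cV[F]_n,
         [/\ x != 0, (card x <= k)%N & r = norm2 (A *m x) / norm2 x]].

Definition thm53_claim : Prop :=
  forall (m n : nat) (A : 'M[F]_(m, n)) (b : 'cV[F]_m) (K : nat)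
         (x' x'' : 'cV[F]_n),
    (1 <= K)%N ->
    stationary (Kreg A b K) x' ->
    card x' = K ->
    let z' := (1%:M - adj A *m A) *m x' + adj A *m b in
    xt z' K.+1 < (2 * beta A (2 * K) ^+ 2 - 1) * xt z' K ->
    x'' != x' ->
    stationary (Kreg A b K) x'' ->
    (K < card x'')%N.

End Generic.

(* Main.v *)
Require Import Defs.
From HB Require Import structures.
From mathcomp Require Import all_boot all_order all_algebra.
From mathcomp Require Import all_classical all_reals.
From mathcomp.real_closed Require Import complex.
From mathcomp Require Import ring lra zify.
Import Order.TTheory GRing.Theory Num.Theory.
Local Open Scope ring_scope.
Set Implicit Arguments. Unset Strict Implicit. Unset Printing Implicit Defensive.

Section Sorting.
Variables (R : realType) (F : comNzRingType) (md : F -> R).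
Hypothesis md_ge0 : forall a, 0 <= md a.

Lemma card_count (T : finType) (P : pred T) : #|[set i | P i]| = count P (enum T).
Proof. by rewrite cardsE cardE -size_filter enumT. Qed.

Variable n : nat.
Implicit Types x : 'cV[F]_n.

Let geR := (fun a b : R => b <= a).

Lemma sortmag_size x : size (sortmag md x) = n.
Proof. by rewrite /sortmag size_sort size_map size_enum_ord. Qed.

Lemma sortmag_sorted x : sorted geR (sortmag md x).
Proof. apply: sort_sorted => a b; exact: le_total. Qed.

Lemma sortmag_count x (P : pred R) :
  count P (sortmag md x) = #|[set i | P (md (x i 0))]|.
Proof.
rewrite card_count /sortmag.
have hp : perm_eq (sort geR [seq md (x i 0) | i <- enum 'I_n]) [seq md (x i 0) | i <- enum 'I_n] by rewrite perm_sort.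
by rewrite (permP hp) count_map.
Qed.

Lemma xt_ge0 x j : 0 <= xt md x j.
Proof.
rewrite /xt; case: (ltnP j.-1 (size (sortmag md x))) => h; last by rewrite nth_default.
have : nth 0 (sortmag md x) j.-1 \in sortmag md x by apply: mem_nth.
rewrite /sortmag mem_sort => /mapP [i _ ->]; exact: md_ge0.
Qed.

Lemma xt_mono x j k : (1 <= j)%N -> (j <= k)%N -> xt md x k <= xt md x j.
Proof.
move=> j1 jk; rewrite /xt.
case: (ltnP k.-1 (size (sortmag md x))) => hk; last by rewrite (nth_default _ hk) xt_ge0.
have hj : (j.-1 < size (sortmag md x))%N by apply: leq_ltn_trans hk; rewrite -!subn1 leq_sub2r.
apply: (sorted_leq_nth (leT := geR) _ _ 0 (sortmag_sorted x)) => //.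
- by move=> a b c /= h1 h2; apply: le_trans h2 h1.
- by move=> a; rewrite /geR lexx.
- by rewrite -!subn1 leq_sub2r.
Qed.

Lemma xt_le (v : R) x k : 0 <= v -> (1 <= k)%N ->
  (#|[set i | (v < md (x i 0))%R]| < k)%N -> xt md x k <= v.
Proof.
move=> v0 k1 hc; rewrite leNgt; apply/negP => hv.
have hk : (k.-1 < size (sortmag md x))%N.
  rewrite ltnNge; apply/negP => h; move: hv; rewrite /xt nth_default //.
  by rewrite ltNge v0.
have hks : (k <= size (sortmag md x))%N by move: hk; case: k k1 {hv hc}.
have : (k <= count (fun a : R => (v < a)%R) (sortmag md x))%N.
  rewrite -(cat_take_drop k (sortmag md x)) count_cat.
  apply: leq_trans (leq_addr _ _).
  have -> : count (fun a : R => (v < a)%R) (take k (sortmag md x)) = size (take k (sortmag md x)).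
    apply/eqP; rewrite -all_count; apply/(all_nthP 0) => i.
    rewrite size_takel // => hi.
    rewrite nth_take //.
    apply: (lt_le_trans hv).
    have := xt_mono x (j:=i.+1) (k:=k) isT hi. by rewrite /xt.
  by rewrite size_takel.
rewrite sortmag_count => h; move: (leq_ltn_trans h hc); by rewrite ltnn.
Qed.

Lemma xt_ge (v : R) x k : (1 <= k)%N ->
  (k <= #|[set i | (v <= md (x i 0))%R]|)%N -> v <= xt md x k.
Proof.
move=> k1 hc; rewrite leNgt; apply/negP => hv.
have : (count (fun a : R => (v <= a)%R) (sortmag md x) <= k.-1)%N.
  rewrite -(cat_take_drop k.-1 (sortmag md x)) count_cat.
  have -> : count (fun a : R => (v <= a)%R) (drop k.-1 (sortmag md x)) = 0%N.
    apply/eqP; rewrite -leqn0 leqNgt -has_count; apply/(has_nthP 0) => -[i hi].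
    rewrite nth_drop => h.
    have hm : xt md x (k.-1 + i).+1 <= xt md x k by apply: xt_mono => //; rewrite -addSn prednK // leq_addr.
    move: hm; rewrite /xt /= => hm.
    by move: (le_lt_trans (le_trans h hm) hv); rewrite ltxx.
  by rewrite addn0; apply: leq_trans (count_size _ _) _; rewrite size_take_min geq_minl.
rewrite sortmag_count => h; have := leq_trans hc h.
by case: k k1 {hv hc h} => // k _; rewrite /= ltnn.
Qed.

End Sorting.


Section Q2.
Variables (R : realType) (F : comNzRingType) (md : F -> R).
Hypothesis md_ge0 : forall a, 0 <= md a.
Variable n : nat.
Implicit Types y : 'cV[F]_n.

Lemma kstar_spec K y : (1 <= K)%N ->
  [/\ (1 <= kstar md K y)%N, (kstar md K y <= K)%N & kstar_cond md K y (kstar md K y)].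
Proof.
move=> K1.
have c1 : kstar_cond md K y 1.
  rewrite /kstar_cond subr_ge0 mul1r.
  have -> : (K.+1 - 1 = K)%N by rewrite subn1.
  have -> : ((K - 1).+1 = K)%N by rewrite subn1 prednK.
  case: (leqP K n) => hKn.
    rewrite big_ltn ?ltnS //.
    by rewrite lerDl sumr_ge0 // => j _; apply: xt_ge0.
  rewrite {1}/xt nth_default ?sortmag_size //; last by rewrite -subn1 leq_subRL // addn1.
  by rewrite sumr_ge0 // => j _; apply: xt_ge0.
have hA : (0 < #|[pred k : 'I_K.+1 | (1 <= k)%N && kstar_cond md K y k]|)%N.
  by apply/card_gt0P; exists (Ordinal (K1 : (1 < K.+1)%N)); rewrite inE /= c1.
have [i0 Hi0 Heq] := eq_bigmax_cond (fun k : 'I_K.+1 => nat_of_ord k) hA.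
have -> : kstar md K y = i0 by rewrite /kstar -Heq.
move: Hi0; rewrite inE /= => /andP [h1 h2]; split => //.
by rewrite -ltnS.
Qed.


Lemma Q2_ge0 K y : (1 <= K)%N -> 0 <= Q2 md K y.
Proof.
move=> K1; rewrite /Q2; have [k1 kK hc] := kstar_spec y K1.
move: k1 kK hc; set k := kstar md K y => k1 kK hc.
move: hc; rewrite /kstar_cond.
set S := \sum_(_ <= j < _) xt md y j.
set M := xt md y (K.+1 - k) => hc.
have eK : (K.+1 - k = (K - k).+1)%N by rewrite subSn.
have hSq : \sum_((K - k).+1 <= j < n.+1) xt md y j ^+ 2 <= M * S.
  rewrite /S mulr_sumr; apply: ler_sum_nat => j /andP[hj _].
  rewrite expr2 ler_wpM2r ?xt_ge0 //.
  by rewrite /M; apply: (xt_mono md_ge0); rewrite ?eK.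
have kr0 : (0 < k%:R :> R) by rewrite ltr0n.
have S0 : 0 <= S by rewrite /S sumr_ge0 // => j _; apply: xt_ge0.
apply: le_trans (lerB (lexx _) hSq).
have -> : (k%:R)^-1 * S ^+ 2 - M * S = (k%:R)^-1 * S * (S - k%:R * M).
  by field; rewrite gt_eqF.
by rewrite mulr_ge0 // mulr_ge0 // invr_ge0 ltW.
Qed.

Lemma Q2_upper K y : (1 <= K)%N -> (K <= n)%N ->
  Q2 md K y <= 2 * (\sum_(K.+1 <= j < n.+1) xt md y j) * xt md y K
               + 3 * (\sum_(K.+1 <= j < n.+1) xt md y j) ^+ 2.
Proof.
move=> K1 Kn; rewrite /Q2; have [k1 kK hc] := kstar_spec y K1.
move: k1 kK hc; set k := kstar md K y => k1 kK hc.
move: hc; rewrite /kstar_cond.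
have eK : (K.+1 - k = (K - k).+1)%N by rewrite subSn.
set M := xt md y (K.+1 - k).
set Rt := \sum_(K.+1 <= j < n.+1) xt md y j.
set m := xt md y K.
have X0 : forall j, 0 <= xt md y j by move=> j; apply: xt_ge0.
have Rt0 : 0 <= Rt by rewrite /Rt sumr_ge0.
have M0 : 0 <= M by apply: X0.
have m0 : 0 <= m by apply: X0.
have h1 : ((K - k).+1 <= K.+1)%N by lia.
have h2 : (K.+1 <= n.+1)%N by lia.
rewrite (big_cat_nat h1 h2) (big_cat_nat h1 h2) /=.
rewrite -/Rt.
set H := \sum_((K - k).+1 <= j < K.+1) xt md y j.
set Hq := \sum_((K - k).+1 <= j < K.+1) xt md y j ^+ 2.
set Tq := \sum_(K.+1 <= j < n.+1) xt md y j ^+ 2.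
move=> A4.
have Tq0 : 0 <= Tq by rewrite /Tq sumr_ge0 // => j _; rewrite sqr_ge0.
set kr := (k%:R : R).
have kr1 : 1 <= kr by rewrite /kr ler1n.
have H0 : 0 <= H by rewrite /H sumr_ge0.
have A3 : H <= (kr - 1) * M + m.
  rewrite /H big_nat_recr /=; last by lia.
  rewrite lerD2r.
  apply: le_trans (ler_sum_nat (G := fun _ => M) _) _.
    move=> j /andP[hj _]; rewrite /M; apply: (xt_mono md_ge0); lia.
  rewrite sumr_const_nat -mulr_natl /kr.
  have -> : (K - (K - k).+1 = k - 1)%N by lia.
  by rewrite natrB // mulr1.
set ik := kr^-1.
have kr0 : 0 < kr by rewrite /kr ltr0n.
have e : ik * kr = 1 by rewrite /ik mulVf // gt_eqF.
have ik0 : 0 <= ik by rewrite /ik invr_ge0 ltW.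
have ik1 : ik <= 1 by rewrite /ik invr_le1 // unitfE gt_eqF.
have A1 : H ^+ 2 * ik <= Hq.
  pose mu := H * ik.
  have : \sum_((K - k).+1 <= j < K.+1) (2 * mu * xt md y j - mu ^+ 2) <= Hq.
    apply: ler_sum_nat => j _.
    have : 0 <= (xt md y j - mu) ^+ 2 by apply: sqr_ge0.
    by lra.
  rewrite sumrB -mulr_sumr sumr_const_nat -/H.
  have -> : (K.+1 - (K - k).+1 = k)%N by lia.
  rewrite /mu => h; apply: le_trans h.
  have -> : (H * ik) ^+ 2 *+ k = kr * (H * ik) ^+ 2 by rewrite /kr mulr_natl.
  have -> : 2 * (H * ik) * H - kr * (H * ik) ^+ 2 = H ^+ 2 * ik * (2 - ik * kr) by ring.
  rewrite e; have -> : (2 - 1 : R) = 1 by lra.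
  by rewrite mulr1.
have B1 : H <= (kr - 1) * Rt + kr * m by nra.
have B2 : ik * H <= Rt + m.
  have := ler_wpM2l ik0 B1.
  have -> : ik * ((kr - 1) * Rt + kr * m) = (ik * kr) * (Rt + m) - ik * Rt by ring.
  by rewrite e mul1r; nra.
have -> : ik * (H + Rt) ^+ 2 = H ^+ 2 * ik + 2 * Rt * (ik * H) + ik * Rt ^+ 2 by ring.
have : ik * Rt ^+ 2 <= Rt ^+ 2 by rewrite ler_piMl // sqr_ge0.
have : Rt * (ik * H) <= Rt * (Rt + m) by rewrite ler_wpM2l.
by nra.
Qed.

End Q2.


Lemma nat_aux1 (u t K : nat) : (t <= u)%N -> (u - t < K - t)%N -> (u < K)%N.
Proof. lia. Qed.

Section Main.
Variables (R : realType) (F : comNzRingType) (cj : F -> F) (md : F -> R)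
  (re : F -> R) (iota : R -> F).
Hypothesis md_ge0 : forall a, 0 <= md a.
Hypothesis md_eq0 : forall a, md a = 0 -> a = 0.
Hypothesis md0 : md 0 = 0.
Hypothesis md2 : forall a, md a ^+ 2 = re (cj a * a).
Hypothesis reD : forall a b, re (a + b) = re a + re b.
Hypothesis re_cj : forall a, re (cj a) = re a.
Hypothesis cjD : forall a b, cj (a + b) = cj a + cj b.
Hypothesis cjM : forall a b, cj (a * b) = cj a * cj b.
Hypothesis cjK : forall a, cj (cj a) = a.
Hypothesis cs : forall a b, re (cj a * b) <= md a * md b.
Hypothesis reI : forall t a, re (iota t * a) = t * re a.
Hypothesis cjI : forall t, cj (iota t) = iota t.
Hypothesis IM : forall s t, iota s * iota t = iota (s * t).

Lemma re0 : re 0 = 0.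
Proof. by have := reD 0 0; rewrite addr0 => h; lra. Qed.
Lemma reN a : re (- a) = - re a.
Proof. by have := reD a (- a); rewrite subrr re0 => h; lra. Qed.
Lemma reB a b : re (a - b) = re a - re b.
Proof. by rewrite reD reN. Qed.
Lemma cj0 : cj 0 = 0.
Proof. by have := cjD 0 0; rewrite addr0 => /(congr1 (fun z => z - cj 0)); rewrite subrr addrK. Qed.
Lemma cjN a : cj (- a) = - cj a.
Proof. by apply/eqP; rewrite -addr_eq0 addrC -cjD addrN cj0. Qed.
Lemma re_sum (I : Type) (r : seq I) (P : pred I) (f : I -> F) :
  re (\sum_(i <- r | P i) f i) = \sum_(i <- r | P i) re (f i).
Proof. exact: (big_morph re reD re0). Qed.
Lemma cj_sum (I : Type) (r : seq I) (P : pred I) (f : I -> F) :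
  cj (\sum_(i <- r | P i) f i) = \sum_(i <- r | P i) cj (f i).
Proof. exact: (big_morph cj cjD cj0). Qed.
Lemma md_gt0 a : a != 0 -> 0 < md a.
Proof. by move=> a0; rewrite lt_def md_ge0 andbT; apply: contra a0 => /eqP /md_eq0 ->. Qed.
Lemma md_eq0P a : (md a == 0) = (a == 0).
Proof. by apply/eqP/eqP => [/md_eq0 //|->]. Qed.
Lemma re_cjC a b : re (cj b * a) = re (cj a * b).
Proof. by rewrite -re_cj cjM cjK mulrC. Qed.
Lemma mdN a : md (- a) = md a.
Proof.
apply/eqP; rewrite -(eqrXn2 (n := 2)) ?md_ge0 //.
by rewrite !md2 cjN mulrNN.
Qed.
Lemma md_iota t a : md (iota t * a) = `|t| * md a.
Proof.
apply/eqP; rewrite -(eqrXn2 (n := 2)) ?md_ge0 ?mulr_ge0 //.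
rewrite exprMn (real_normK (num_real t)) !md2 cjM cjI.
have -> : iota t * cj a * (iota t * a) = iota t * iota t * (cj a * a) by ring.
by rewrite IM reI.
Qed.
Lemma md_add2 a b : md (a + b) ^+ 2 = md a ^+ 2 + md b ^+ 2 + 2 * re (cj a * b).
Proof.
rewrite !md2 cjD mulrDl !mulrDr !reD re_cjC; ring.
Qed.

Section Vec.
Variable n : nat.
Implicit Types x y v : 'cV[F]_n.

Lemma sqnorm_ge0 m (v : 'cV[F]_m) : 0 <= sqnorm md v.
Proof. by rewrite /sqnorm sumr_ge0 // => i _; rewrite sqr_ge0. Qed.

Lemma reinnerE m (u v : 'cV[F]_m) : reinner cj re u v = \sum_i re (cj (u i 0) * v i 0).
Proof. by rewrite /reinner re_sum. Qed.

Lemma sqnormE m (v : 'cV[F]_m) : sqnorm md v = reinner cj re v v.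
Proof. by rewrite reinnerE /sqnorm; apply: eq_bigr => i _; rewrite md2. Qed.

Lemma sqnormD m (u v : 'cV[F]_m) :
  sqnorm md (u + v) = sqnorm md u + sqnorm md v + 2 * reinner cj re u v.
Proof.
rewrite /sqnorm reinnerE mulr_sumr -!big_split /=; apply: eq_bigr => i _.
by rewrite mxE md_add2.
Qed.

Lemma reinnerB m (u v w : 'cV[F]_m) :
  reinner cj re u (v - w) = reinner cj re u v - reinner cj re u w.
Proof.
rewrite !reinnerE -sumrB; apply: eq_bigr => i _.
by rewrite !mxE mulrBr reB.
Qed.

Lemma reinner0l m (v : 'cV[F]_m) : reinner cj re 0 v = 0.
Proof. by rewrite reinnerE big1 // => i _; rewrite mxE cj0 mul0r re0. Qed.

Lemma adjE m (A : 'M[F]_(m, n)) (r : 'cV[F]_m) (v : 'cV[F]_n) :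
  reinner cj re (adj cj A *m r) v = reinner cj re r (A *m v).
Proof.
rewrite /reinner; congr re.
under eq_bigr do rewrite !mxE cj_sum big_distrl /=.
rewrite exchange_big /=; apply: eq_bigr => k _.
rewrite !mxE big_distrr /=; apply: eq_bigr => i _.
by rewrite !mxE cjM cjK; ring.
Qed.

Definition dv (j : 'I_n) (a : F) : 'cV[F]_n := \col_i (if i == j then a else 0).

Lemma sqnorm_dv j a : sqnorm md (dv j a) = md a ^+ 2.
Proof.
rewrite /sqnorm (bigD1 j) //= big1 ?addr0 ?mxE ?eqxx // => i /negbTE ij.
by rewrite mxE ij md0 expr0n.
Qed.

Lemma norm2_dv j a : norm2 md (dv j a) = md a.
Proof. by rewrite /norm2 sqnorm_dv sqrtr_sqr ger0_norm. Qed.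

Lemma reinner_dv w j a : reinner cj re w (dv j a) = re (cj (w j 0) * a).
Proof.
rewrite reinnerE (bigD1 j) //= big1 ?addr0 ?mxE ?eqxx // => i /negbTE ij.
by rewrite mxE ij mulr0 re0.
Qed.

Lemma mul_dv m (A : 'M[F]_(m, n)) j a k : (A *m dv j a) k 0 = A k j * a.
Proof.
rewrite mxE (bigD1 j) //= big1 ?addr0 ?mxE ?eqxx // => i /negbTE ij.
by rewrite mxE ij mulr0.
Qed.

Lemma sqnorm_dv_iota m (A : 'M[F]_(m, n)) j t u :
  sqnorm md (A *m dv j (iota t * u)) = t ^+ 2 * sqnorm md (A *m dv j u).
Proof.
rewrite /sqnorm mulr_sumr; apply: eq_bigr => k _.
rewrite !mul_dv mulrCA md_iota exprMn (real_normK (num_real t)) //.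
Qed.

Lemma Kreg_diff m (A : 'M[F]_(m, n)) b K x j a :
  Kreg md A b K (x + dv j a) - Kreg md A b K x =
  Q2 md K (x + dv j a) - Q2 md K x
  + 2 * re (cj ((adj cj A *m (A *m x - b)) j 0) * a) + sqnorm md (A *m dv j a).
Proof.
rewrite /Kreg; have -> : A *m (x + dv j a) - b = (A *m x - b) + A *m dv j a by rewrite mulmxDr addrAC.
rewrite (sqnormD (A *m x - b)) -adjE reinner_dv.
set u := Q2 md K _; set v := Q2 md K x; lra.
Qed.

Lemma dir_lemma m (A : 'M[F]_(m, n)) b K x j u D E t0 :
  stationary cj md re (Kreg md A b K) x -> u != 0 -> 0 < t0 ->
  (forall t, 0 < t -> t < t0 ->
     Q2 md K (x + dv j (iota t * u)) - Q2 md K x <= t * D + t ^+ 2 * E) ->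
  0 <= D + 2 * re (cj ((adj cj A *m (A *m x - b)) j 0) * u).
Proof.
move=> st u0 t00 hQ.
set rho := re _.
rewrite leNgt; apply/negP => hneg.
set eta := - (D + 2 * rho).
have eta0 : 0 < eta by rewrite /eta oppr_gt0.
set mu := md u.
have mu0 : 0 < mu by apply: md_gt0.
set C := sqnorm md (A *m dv j u).
have C0 : 0 <= C by apply: sqnorm_ge0.
have [|del del0 hdel] := st (eta / (4 * mu)).
  by rewrite divr_gt0 // mulr_gt0.
set t := Num.min (t0 / 2) (Num.min (del / (2 * mu)) (eta / (2 * (`|E| + C + 1)))).
have E1 : 0 < `|E| + C + 1 by rewrite ltr_wpDl ?addr_ge0.
have tp : 0 < t by rewrite !lt_min !divr_gt0 ?mulr_gt0.
have tt0 : t < t0.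
  apply: le_lt_trans (_ : t0 / 2 < t0); first by rewrite ge_min lexx.
  by lra.
have tdel : t * mu < del.
  have : t <= del / (2 * mu) by rewrite !ge_min lexx orbT.
  rewrite ler_pdivlMr ?mulr_gt0 // => h.
  have : t * mu * 2 <= del by lra.
  have : 0 < t * mu by rewrite mulr_gt0.
  lra.
have tE : t * (E + C) <= eta / 2.
  have : t <= eta / (2 * (`|E| + C + 1)) by rewrite !ge_min lexx !orbT.
  rewrite ler_pdivlMr ?mulr_gt0 // => h.
  have : E <= `|E| by apply: ler_norm.
  nra.
have := hdel (x + dv j (iota t * u)).
rewrite [x + _]addrC addrK norm2_dv md_iota gtr0_norm // -/mu.
rewrite mulr_gt0 // tdel => /(_ isT).
rewrite reinner0l subr0.
have -> : Kreg md A b K (dv j (iota t * u) + x) = Kreg md A b K (x + dv j (iota t * u)) by rewrite addrC.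
rewrite Kreg_diff sqnorm_dv_iota -/C.
rewrite mulrCA reI -/rho.
have hq := hQ t tp tt0.
set Qd := Q2 md K _ - _ in hq *.
rewrite ler_pdivlMr ?mulr_gt0 //.
have -> : - (eta / (4 * mu)) * (t * mu) = - (eta * t / 4).
  by field; rewrite gt_eqF.
move=> h.
have : Qd + 2 * (t * rho) + t ^+ 2 * C <= t * (D + 2 * rho) + t * (t * (E + C)).
  have -> : t * (D + 2 * rho) + t * (t * (E + C)) = t * D + t ^+ 2 * E + 2 * (t * rho) + t ^+ 2 * C by ring.
  lra.
have : t * (t * (E + C)) <= t * (eta / 2) by rewrite ler_wpM2l // ltW.
have : t * (D + 2 * rho) = - (t * eta) by rewrite /eta; ring.
have : 0 < t * eta by rewrite mulr_gt0.
lra.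
Qed.

Definition supp (y : 'cV[F]_n) := [set i | y i 0 != 0].

Lemma card_md y : #|[set i | 0 < md (y i 0)]| = Defs.card y.
Proof.
rewrite /Defs.card; apply: eq_card => i; rewrite !inE.
by rewrite lt_def md_ge0 andbT md_eq0P.
Qed.

Lemma dvE x j a i : (x + dv j a) i 0 = if i == j then x i 0 + a else x i 0.
Proof. by rewrite !mxE; case: eqP => _; rewrite ?addr0. Qed.

Lemma tail_zero K y : (Defs.card y <= K)%N ->
  \sum_(K.+1 <= l < n.+1) xt md y l = 0.
Proof.
move=> hc; rewrite big1_seq // => l /andP[_]; rewrite mem_index_iota => /andP[hl _].
apply/le_anti; rewrite xt_ge0 // andbT.
apply: xt_le => //; first by lia.
by rewrite card_md; lia.
Qed.

Lemma Q2_le0 K y : (1 <= K)%N -> (K <= n)%N -> (Defs.card y <= K)%N -> Q2 md K y <= 0.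
Proof.
move=> K1 Kn hc; apply: le_trans (Q2_upper md_ge0 y K1 Kn) _.
by rewrite tail_zero // mulr0 mul0r expr0n /= mulr0 addr0.
Qed.

Lemma stat_zero m (A : 'M[F]_(m, n)) b K x j :
  (1 <= K)%N -> (K <= n)%N ->
  stationary cj md re (Kreg md A b K) x ->
  (forall a, (Defs.card (x + dv j a) <= K)%N) ->
  (adj cj A *m (A *m x - b)) j 0 = 0.
Proof.
move=> K1 Kn st hc; set w := (adj cj A *m (A *m x - b)) j 0.
apply/eqP; apply: contraT => w0.
have := dir_lemma (j := j) (u := - w) (D := 0) (E := 0) (t0 := 1) st.
rewrite oppr_eq0 w0 ltr01 => /(_ isT isT) h.
have : 0 <= 0 + 2 * re (cj w * - w).
  apply: h => t _ _.
  have := Q2_le0 K1 Kn (hc (iota t * - w)).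
  have := Q2_ge0 md_ge0 x K1.
  rewrite !mulr0 addr0; lra.
rewrite mulrN reN -md2 add0r.
have := md_gt0 w0; nra.
Qed.

Lemma card_dv_in x j a : x j 0 != 0 -> (Defs.card (x + dv j a) <= Defs.card x)%N.
Proof.
move=> xj; rewrite /Defs.card; apply: subset_leq_card; apply/fintype.subsetP => i; rewrite !inE dvE.
by case: (eqVneq i j) => [->|_].

Qed.

Lemma card_dv_out x j a : (Defs.card (x + dv j a) <= (Defs.card x).+1)%N.
Proof.
rewrite /Defs.card; apply: (@leq_trans #|j |: [set i | x i 0 != 0]|).
  apply: subset_leq_card; apply/fintype.subsetP => i; rewrite !inE dvE.
  by case: (eqVneq i j) => [->|_]; rewrite ?eqxx //= => ->; rewrite orbT.
by rewrite cardsU1; case: (j \notin _).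
Qed.

Lemma stat_off m (A : 'M[F]_(m, n)) b K x i j :
  (1 <= K)%N -> (K <= n)%N ->
  stationary cj md re (Kreg md A b K) x -> Defs.card x = K ->
  x j 0 = 0 -> x i 0 != 0 ->
  md ((adj cj A *m (A *m x - b)) j 0) <= md (x i 0).
Proof.
move=> K1 Kn st cx xj xi; set w := (adj cj A *m (A *m x - b)) j 0.
rewrite leNgt; apply/negP => hw.
have xi0 : 0 < md (x i 0) by apply: md_gt0.
have w0 : w != 0 by apply: contraTneq hw => ->; rewrite md0 ltNge ltW.
set mu := md (- w).
have mu0 : 0 < mu by rewrite /mu md_gt0 // oppr_eq0.
have := dir_lemma (j := j) (u := - w) (D := 2 * mu * md (x i 0)) (E := 3 * mu ^+ 2)
  (t0 := md (x i 0) / mu) st.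
rewrite oppr_eq0 w0 divr_gt0 // => /(_ isT isT) h.
have : 0 <= 2 * mu * md (x i 0) + 2 * re (cj w * - w).
  apply: h => t tp tt0.
  set y := x + dv j (iota t * - w).
  have hvj : md (y j 0) = t * mu by rewrite /y dvE eqxx xj add0r md_iota gtr0_norm.
  have hyl : forall l, l != j -> y l 0 = x l 0 by move=> l /negbTE lj; rewrite /y dvE lj.
  have tmu : t * mu < md (x i 0) by move: tt0; rewrite ltr_pdivlMr.
  have HR : \sum_(K.+1 <= l < n.+1) xt md y l <= t * mu.
    case: (ltnP K n) => hKn; last first.
      by rewrite big_geq ?ltnS // mulr_ge0 // ltW.
    rewrite big_ltn ?ltnS //.
    rewrite (_ : \sum_(K.+2 <= l < n.+1) xt md y l = 0) ?addr0.
      apply: xt_le => //; first by rewrite mulr_ge0 // ltW.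
      rewrite ltnS -cx; apply: subset_leq_card; apply/fintype.subsetP => l; rewrite !inE.
      case: (eqVneq l j) => [->|lj]; first by rewrite hvj ltxx.
      by rewrite hyl // => hl; apply/eqP => x0; move: hl; rewrite x0 md0 ltNge (mulr_ge0 (ltW tp) (ltW mu0)).
    rewrite big1_seq // => l /andP[_]; rewrite mem_index_iota => /andP[hl _].
    apply/le_anti; rewrite xt_ge0 // andbT.
    apply: xt_le => //; first by lia.
    rewrite card_md; apply: leq_ltn_trans (card_dv_out _ _ _) _; lia.
  have Hm : xt md y K <= md (x i 0).
    apply: (xt_le md_ge0 (ltW xi0) K1).
    apply: (@leq_ltn_trans #|[set i | x i 0 != 0] :\ i|).
      apply: subset_leq_card; apply/fintype.subsetP => l; rewrite !inE.
      case: (eqVneq l j) => [->|lj]; first by rewrite hvj ltNge ltW.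
      rewrite hyl // => hl; apply/andP; split.
        by apply: contraTneq hl => ->; rewrite ltxx.
      by apply/eqP => x0; move: hl; rewrite x0 md0 ltNge ltW.
    have := cardsD1 i [set i | x i 0 != 0]; rewrite inE xi -[#|[set i | _]|]/(Defs.card x) cx.
    lia.
  have := Q2_upper md_ge0 y K1 Kn.
  have := Q2_ge0 md_ge0 x K1.
  set Rt := \sum_(_ <= _ < _) _ in HR *.
  have Rt0 : 0 <= Rt by rewrite /Rt sumr_ge0 // => l _; apply: xt_ge0.
  have m0 : 0 <= xt md y K by apply: xt_ge0.
  nra.
rewrite mulrN reN -md2 -(mdN w) -/mu.
have : md (x i 0) < mu by rewrite /mu mdN.
nra.
Qed.

Lemma reinnerC m (u v : 'cV[F]_m) : reinner cj re u v = reinner cj re v u.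
Proof. by rewrite !reinnerE; apply: eq_bigr => i _; rewrite re_cjC. Qed.

Lemma zE m (A : 'M[F]_(m, n)) b x :
  (1%:M - adj cj A *m A) *m x + adj cj A *m b = x - adj cj A *m (A *m x - b).
Proof. by rewrite mulmxBl mul1mx mulmxBr mulmxA opprB addrA addrAC. Qed.

End Vec.

Lemma sum_gt0_in (I : finType) (P : {set I}) (g : I -> R) :
  (exists i, i \in P) -> (forall i, i \in P -> 0 < g i) -> 0 < \sum_(i in P) g i.
Proof.
case=> i0 hi0 hg; rewrite (bigD1 i0) //=.
have h1 := hg i0 hi0.
have h2 : 0 <= \sum_(i in P | i != i0) g i by rewrite sumr_ge0 // => i /andP[hi _]; apply: ltW; apply: hg.
lra.
Qed.

Lemma main_claim : thm53_claim cj md re.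
Proof.
move=> m n A b K x1 x2 K1 st1 c1 z' hz x21 st2.
have Kn : (K <= n)%N by rewrite -c1 /Defs.card -[X in (_ <= X)%N]card_ord max_card.
rewrite ltnNge; apply/negP => c2.
set w1 := adj cj A *m (A *m x1 - b).
set w2 := adj cj A *m (A *m x2 - b).
set z1 := x1 - w1.
set z2 := x2 - w2.
have ez : z' = z1 by rewrite /z' zE.
rewrite ez in hz; clear ez z'.
have z1E : forall i, z1 i 0 = x1 i 0 - w1 i 0 by move=> i; rewrite !mxE.
have z2E : forall i, z2 i 0 = x2 i 0 - w2 i 0 by move=> i; rewrite !mxE.
have F1 : forall i, x1 i 0 != 0 -> z1 i 0 = x1 i 0.
  move=> i xi; rewrite z1E (stat_zero K1 Kn st1) ?subr0 // => a.
  by rewrite -c1; apply: card_dv_in.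
have F2 : forall i j, x1 j 0 = 0 -> x1 i 0 != 0 -> md (z1 j 0) <= md (x1 i 0).
  move=> i j xj xi; rewrite z1E xj add0r mdN.
  exact: stat_off K1 Kn st1 c1 xj xi.
have F3 : forall i, x2 i 0 != 0 -> z2 i 0 = x2 i 0.
  move=> i xi; rewrite z2E (stat_zero K1 Kn st2) ?subr0 // => a.
  by apply: leq_trans _ c2; apply: card_dv_in.
have F5 : (Defs.card x2 < K)%N -> forall j, x2 j 0 = 0 -> z2 j 0 = 0.
  move=> lt j xj; rewrite z2E xj (stat_zero K1 Kn st2) ?subr0 // => a.
  by apply: leq_trans lt; apply: card_dv_out.
have F4 : forall i j, x2 j 0 = 0 -> x2 i 0 != 0 -> md (z2 j 0) <= md (x2 i 0).
  move=> i j xj xi.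
  case: (ltnP (Defs.card x2) K) => hc.
    by rewrite F5 // md0.
  have ec : Defs.card x2 = K by apply/eqP; rewrite eqn_leq c2 hc.
  rewrite z2E xj add0r mdN.
  exact: stat_off K1 Kn st2 ec xj xi.
have S1c : #|[set l | x1 l 0 != 0]| = K by [].
have G1 : forall i, x1 i 0 != 0 -> xt md z1 K <= md (z1 i 0).
  move=> i xi; apply: (xt_le md_ge0 (md_ge0 _) K1).
  apply: (@leq_ltn_trans #|[set l | x1 l 0 != 0] :\ i|).
    apply: subset_leq_card; apply/fintype.subsetP => l; rewrite !inE => hl.
    apply/andP; split; first by apply: contraTneq hl => ->; rewrite ltxx.
    apply/negP => /eqP xl; move: hl; rewrite (F1 i xi) ltNge.
    by rewrite (F2 i l xl xi).
  have := cardsD1 i [set l | x1 l 0 != 0]; rewrite inE xi S1c; lia.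
have G2 : forall j, x1 j 0 = 0 -> md (z1 j 0) <= xt md z1 K.+1.
  move=> j xj; apply: (xt_ge md_ge0 (k := K.+1)) => //.
  apply: (@leq_trans #|j |: [set l | x1 l 0 != 0]|).
    by rewrite cardsU1 inE xj eqxx S1c.
  apply: subset_leq_card; apply/fintype.subsetP => l; rewrite !inE => /orP [/eqP -> | hl].
    by rewrite lexx.
  by rewrite (F1 l hl); apply: F2.
set a := xt md z1 K in G1 hz.
set c := xt md z1 K.+1 in G2 hz.
set d := x1 - x2.
have dE : forall i, d i 0 = x1 i 0 - x2 i 0 by move=> i; rewrite !mxE.
have [i0 hi0] : exists i0, d i0 0 != 0.
  have dn0 : d != 0 by rewrite /d subr_eq0 eq_sym.
  case: (boolP [exists i, d i 0 != 0]) => [/existsP //| /existsPn h].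
  exfalso; move/eqP: dn0; apply; apply/matrixP => i k.
  by rewrite (ord1 k) [RHS]mxE; move: (h i); rewrite negbK => /eqP.
have cd : (Defs.card d <= 2 * K)%N.
  rewrite /Defs.card; apply: (@leq_trans #|[set l | x1 l 0 != 0] :|: [set l | x2 l 0 != 0]|).
    apply: subset_leq_card; apply/fintype.subsetP => l; rewrite !inE dE.
    by apply: contraR; rewrite negb_or !negbK => /andP[/eqP -> /eqP ->]; rewrite subrr.
  rewrite cardsU; move: c2; rewrite /Defs.card S1c; lia.
have sd0 : 0 < sqnorm md d.
  rewrite /sqnorm (bigD1 i0) //=.
  have := md_gt0 hi0.
  have : 0 <= \sum_(i < n | i != i0) md (d i 0) ^+ 2 by rewrite sumr_ge0 // => i _; rewrite sqr_ge0.
  nra.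
set be := beta md A (2 * K) in hz.
have hlb : forall r, [set r : R | exists x : 'cV[F]_n, [/\ x != 0, (Defs.card x <= 2 * K)%N
     & r = norm2 md (A *m x) / norm2 md x]]%classic r -> 0 <= r.
  by move=> r [x [_ _ ->]]; rewrite divr_ge0 // sqrtr_ge0.
have hb0 : 0 <= be.
  apply: lb_le_inf; last by move=> r /hlb.
  by exists (norm2 md (A *m d) / norm2 md d); exists d; split => //; rewrite -subr_eq0 subr0; apply/eqP => h0; move: hi0; rewrite h0 mxE eqxx.
have hbd : be <= norm2 md (A *m d) / norm2 md d.
  apply: (ge_inf (E := [set r : R | exists x : 'cV[F]_n, [/\ x != 0, (Defs.card x <= 2 * K)%N
     & r = norm2 md (A *m x) / norm2 md x]]%classic)).
    by exists 0 => r /hlb.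
  by exists d; split => //; apply/eqP => h0; move: hi0; rewrite h0 mxE eqxx.
have nd0 : 0 < norm2 md d by rewrite /norm2 sqrtr_gt0.
have hb2 : be ^+ 2 * sqnorm md d <= sqnorm md (A *m d).
  move: hbd; rewrite ler_pdivlMr // => h.
  have e1 : norm2 md d ^+ 2 = sqnorm md d by rewrite /norm2 sqr_sqrtr // sqnorm_ge0.
  have e2 : norm2 md (A *m d) ^+ 2 = sqnorm md (A *m d) by rewrite /norm2 sqr_sqrtr // sqnorm_ge0.
  rewrite -e1 -e2.
  have : 0 <= be * norm2 md d by rewrite mulr_ge0 // ltW.
  nra.
have hw : w1 - w2 = adj cj A *m (A *m d).
  by rewrite /w1 /w2 -mulmxBr /d [A *m (x1 - x2)]mulmxBr opprB addrA subrK.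
have hz12 : z1 - z2 = d - adj cj A *m (A *m d).
  rewrite -hw; apply/matrixP => i k; rewrite !mxE; ring.
have hid : reinner cj re d (z1 - z2) = sqnorm md d - sqnorm md (A *m d).
  by rewrite hz12 reinnerB -sqnormE reinnerC adjE -sqnormE.
set B := be ^+ 2 in hb2 hz *.
pose phi i := re (cj (d i 0) * (z1 i 0 - z2 i 0)) - (1 - B) * md (d i 0) ^+ 2.
have hsum : \sum_i phi i <= 0.
  have -> : \sum_i phi i = reinner cj re d (z1 - z2) - (1 - B) * sqnorm md d.
    rewrite reinnerE /sqnorm mulr_sumr -sumrB; apply: eq_bigr => i _.
    by rewrite /phi; congr (re (_ * _) - _); rewrite !mxE.
  rewrite hid; lra.
have B0 : 0 <= B by rewrite /B sqr_ge0.
have c0 : 0 <= c by apply: xt_ge0.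
have a0 : 0 <= a by apply: xt_ge0.
have B1 : 0 < 2 * B - 1.
  rewrite ltNge; apply/negP => h.
  have : (2 * B - 1) * a <= 0 by rewrite mulr_le0_ge0.
  lra.
have Bp : 0 < B by lra.
have ap : 0 < a.
  rewrite lt_def a0 andbT; apply/negP => /eqP a00; move: hz; rewrite a00 mulr0; lra.
have Rboth : forall i, x1 i 0 != 0 -> x2 i 0 != 0 -> phi i = B * md (d i 0) ^+ 2.
  move=> i h1 h2; rewrite /phi.
  have -> : z1 i 0 - z2 i 0 = d i 0 by rewrite F1 // F3 // dE.
  rewrite -md2; ring.
have Rnone : forall i, x1 i 0 = 0 -> x2 i 0 = 0 -> phi i = 0.
  move=> i h1 h2; rewrite /phi dE h1 h2 subrr cj0 mul0r re0 md0; ring.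
have RP : forall i, x1 i 0 != 0 -> x2 i 0 = 0 ->
    B * md (z1 i 0) ^+ 2 - md (z1 i 0) * md (z2 i 0) <= phi i.
  move=> i h1 h2; rewrite /phi dE h2 subr0 -(F1 i h1) mulrBr reB -md2.
  have := cs (z1 i 0) (z2 i 0); lra.
have RQ : forall i, x1 i 0 = 0 -> x2 i 0 != 0 ->
    B * md (z2 i 0) ^+ 2 - md (z2 i 0) * md (z1 i 0) <= phi i.
  move=> i h1 h2; rewrite /phi dE h1 sub0r -(F3 i h2) mdN cjN mulNr mulrBr reN reB -md2.
  have := cs (z2 i 0) (z1 i 0); lra.
have Rpair : forall i j, x1 i 0 != 0 -> x2 i 0 = 0 -> x1 j 0 = 0 -> x2 j 0 != 0 ->
    0 < phi i + phi j.
  move=> i j h1 h2 h3 h4.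
  have hp := G1 i h1.
  have hq : md (z2 i 0) <= md (z2 j 0) by rewrite (F3 j h4); apply: F4.
  have hs := G2 j h3.
  have hr : 0 < md (z2 j 0) by rewrite (F3 j h4) md_gt0.
  have q0 := md_ge0 (z2 i 0).
  have s0 := md_ge0 (z1 j 0).
  have p0 := md_ge0 (z1 i 0).
  have hPi := RP i h1 h2.
  have hQj := RQ j h3 h4.
  set p := md (z1 i 0) in hp hPi p0.
  set q := md (z2 i 0) in hq hPi q0.
  set r := md (z2 j 0) in hq hr hQj.
  set s := md (z1 j 0) in hs hQj s0.
  have e1 : p * q <= p * r by rewrite ler_wpM2l.
  have e2 : r * s <= r * c by rewrite ler_wpM2l // ltW.
  have e3 : r * c < r * ((2 * B - 1) * a) by rewrite ltr_pM2l.
  have e4 : r * ((2 * B - 1) * a) <= r * ((2 * B - 1) * p) by rewrite ler_wpM2l ?ler_wpM2l // ltW.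
  have e5 : 0 <= B * (p - r) ^+ 2 by rewrite mulr_ge0 // sqr_ge0.
  have : B * p ^+ 2 - p * r + B * r ^+ 2 - (2 * B - 1) * p * r = B * (p - r) ^+ 2 by ring.
  nra.
have Runp : (Defs.card x2 < K)%N -> forall i, x1 i 0 != 0 -> x2 i 0 = 0 -> 0 < phi i.
  move=> lt i h1 h2; rewrite /phi dE h2 subr0 (F5 lt i h2) subr0 -(F1 i h1) -md2.
  have := md_gt0 h1; rewrite -(F1 i h1) => hm.
  have : 0 < md (z1 i 0) ^+ 2 by rewrite exprn_gt0.
  nra.
set S1 := [set l | x1 l 0 != 0] in S1c.
set S2 := [set l | x2 l 0 != 0].
have S2c : (#|S2| <= K)%N by [].
set PS := S1 :\: S2.
set QS := S2 :\: S1.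
have inP : forall i, (i \in PS) = (x1 i 0 != 0) && (x2 i 0 == 0).
  by move=> i; rewrite !inE negbK andbC.
have inQ : forall i, (i \in QS) = (x1 i 0 == 0) && (x2 i 0 != 0).
  by move=> i; rewrite !inE negbK.
have Rout : forall i, i \notin PS -> i \notin QS -> 0 <= phi i.
  move=> i; rewrite inP inQ.
  case: (eqVneq (x1 i 0) 0) => h1; case: (eqVneq (x2 i 0) 0) => h2 //= _ _.
    by rewrite Rnone.
  by rewrite Rboth // mulr_ge0 // sqr_ge0.
have I12 : (#|S1 :&: S2| <= #|S2|)%N by apply: subset_leq_card; apply: subsetIr.
have eQ : #|QS| = (#|S2| - #|S1 :&: S2|)%N by rewrite /QS cardsD (finset.setIC S2 S1).
have eP : #|PS| = (#|S1| - #|S1 :&: S2|)%N by rewrite /PS cardsD.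
have hnq : (#|QS| <= #|PS|)%N by rewrite eQ eP S1c leq_sub2r.
have hlt : (#|QS| < #|PS|)%N -> (Defs.card x2 < K)%N.
  by rewrite eQ eP S1c -[Defs.card x2]/#|S2|; apply: nat_aux1.
have hPpos : (#|QS| < #|PS|)%N -> forall i, i \in PS -> 0 < phi i.
  by move=> h i; rewrite inP => /andP[h1 /eqP h2]; apply: Runp (hlt h) _ h1 h2.
suff : 0 < \sum_i phi i by lra.
case: (boolP [exists i, i \in PS]) => hP; last first.
  have hP0 : forall i, i \notin PS by move=> i; apply/negP => hi; move/negP: hP; apply; apply/existsP; exists i.
  have hQ0 : forall i, i \notin QS.
    move=> i; apply/negP => hi.
    have : (0 < #|QS|)%N by apply/card_gt0P; exists i.
    have : #|PS| = 0%N.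
      by apply/eqP; rewrite -leqn0 leqNgt; apply/negP => /card_gt0P [l hl]; move: (hP0 l); rewrite hl.
    by move=> h0 h1; move: hnq; rewrite h0 leqNgt h1.
  rewrite (bigD1 i0) //=.
  have h0 : 0 < phi i0.
    have := hP0 i0; have := hQ0 i0; rewrite inP inQ.
    move: hi0; rewrite dE.
    case: (eqVneq (x1 i0 0) 0) => h1; case: (eqVneq (x2 i0 0) 0) => h2 //=.
      by rewrite h1 h2 subrr eqxx.
    by move=> hd _ _; rewrite Rboth // mulr_gt0 // exprn_gt0 // md_gt0 // dE.
  have : 0 <= \sum_(i < n | i != i0) phi i by rewrite sumr_ge0 // => i _; apply: Rout.
  lra.
have hsplit : \sum_(i in PS) phi i + \sum_(i in QS) phi i <= \sum_i phi i.
  rewrite [X in _ <= X](bigID (fun i => i \in PS)) /=.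
  rewrite [X in _ <= _ + X](bigID (fun i => i \in QS)) /=.
  have eQ' : \sum_(i < n | (i \notin PS) && (i \in QS)) phi i = \sum_(i in QS) phi i.
    apply: eq_bigl => i; rewrite inP inQ.
    by case: (x1 i 0 == 0); case: (x2 i 0 == 0).
  rewrite eQ'.
  have : 0 <= \sum_(i < n | (i \notin PS) && (i \notin QS)) phi i.
    by apply: sumr_ge0 => i /andP[hp hq]; apply: Rout.
  lra.
suff hpos : 0 < \sum_(i in PS) phi i + \sum_(i in QS) phi i by lra.
have [i1 hi1] := existsP hP.
have np0 : (0 < #|PS|)%N by apply/card_gt0P; exists i1.
set SP := \sum_(i in PS) phi i.
set SQ := \sum_(i in QS) phi i.
case: (boolP [exists j, j \in QS]) => hQ; last first.
  have hQ0 : forall j, j \in QS = false.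
    by move=> j; apply/negbTE; apply: contra hQ => hj; apply/existsP; exists j.
  have -> : SQ = 0 by rewrite /SQ big_pred0.
  have nq0 : #|QS| = 0%N by apply/eqP; rewrite -leqn0 leqNgt; apply/negP => /card_gt0P [l hl]; rewrite hQ0 in hl.
  rewrite addr0; apply: sum_gt0_in; first by exists i1.
  by apply: hPpos; rewrite nq0.
have DS : 0 < \sum_(i in PS) \sum_(j in QS) (phi i + phi j).
  apply: sum_gt0_in; first by exists i1.
  move=> i hi; apply: sum_gt0_in; first by case/existsP: hQ => j hj; exists j.
  move=> j hj; move: hi hj; rewrite inP inQ => /andP[h1 /eqP h2] /andP[/eqP h3 h4].
  exact: Rpair.
have eDS : \sum_(i in PS) \sum_(j in QS) (phi i + phi j) = #|QS|%:R * SP + #|PS|%:R * SQ.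
  under eq_bigr do rewrite big_split /= sumr_const.
  by rewrite big_split /= sumrMnl sumr_const !mulr_natl.
have hPP : 0 <= (#|PS| - #|QS|)%:R * SP.
  case: (ltnP #|QS| #|PS|) => h.
    by rewrite mulr_ge0 // sumr_ge0 // => i hi; apply: ltW; apply: hPpos.
  have -> : (#|PS| - #|QS| = 0)%N by apply/eqP; rewrite subn_eq0.
  by rewrite mul0r.
have e : #|PS|%:R * (SP + SQ) = (#|PS| - #|QS|)%:R * SP + (#|QS|%:R * SP + #|PS|%:R * SQ).
  rewrite natrB //; ring.
have npR : 0 < (#|PS|%:R : R) by rewrite ltr0n.
have : 0 < #|PS|%:R * (SP + SQ) by rewrite e -eDS; lra.
by rewrite pmulr_rgt0.
Qed.

End Main.


Section Cx.
Variable R : realType.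
Local Notation md := (@Normc.normc R).
Local Notation re := (@complex.Re R).
Local Notation cj := (@conjc R).
Local Open Scope complex_scope.

Lemma c_mul (a b c d : R) : (a +i* b) * (c +i* d) = (a * c - b * d) +i* (a * d + b * c).
Proof. by []. Qed.
Lemma c_md (a b : R) : md (a +i* b) = Num.sqrt (a ^+ 2 + b ^+ 2).
Proof. by []. Qed.

Lemma c_md2 x : md x ^+ 2 = re (cj x * x).
Proof.
case: x => a b; rewrite c_md /conjc c_mul /= sqr_sqrtr ?addr_ge0 ?sqr_ge0 //. ring.
Qed.
Lemma c_reD x y : re (x + y) = re x + re y.
Proof. by case: x => a b; case: y => c d. Qed.
Lemma c_cs x y : re (cj x * y) <= md x * md y.
Proof.
case: x => a b; case: y => c d; rewrite !c_md /conjc c_mul /= -sqrtrM ?addr_ge0 ?sqr_ge0 //.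
apply: le_trans (ler_norm _) _.
rewrite -sqrtr_sqr ler_sqrt; last by rewrite mulr_ge0 ?addr_ge0 ?sqr_ge0.
have : 0 <= (a * d - b * c) ^+ 2 by apply: sqr_ge0.
by nra.
Qed.
Lemma c_reI (t : R) x : re (t%:C * x) = t * re x.
Proof. case: x => a b /=. ring. Qed.
Lemma c_IM (s t : R) : s%:C * t%:C = (s * t)%:C.
Proof. by rewrite c_mul /=; congr (_ +i* _); ring. Qed.
Lemma c_ge0 x : 0 <= md x.
Proof. by case: x => a b; rewrite c_md sqrtr_ge0. Qed.
Lemma c_recj x : re (cj x) = re x.
Proof. by case: x. Qed.
Lemma c_cjD x y : cj (x + y) = cj x + cj y.
Proof. exact: rmorphD. Qed.
Lemma c_cjM x y : cj (x * y) = cj x * cj y.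
Proof. exact: rmorphM. Qed.
End Cx.

Unset Implicit Arguments.

Theorem theorem5p3 (R : realType) :
  thm53_claim (F := R) id (fun x => `|x|) id /\
  thm53_claim (F := R[i]) (@conjc R) (@Normc.normc R) (@complex.Re R).
Proof.
split.
- have h1 : forall a : R, 0 <= `|a| by move=> a; apply: normr_ge0.
  have h2 : forall a : R, `|a| = 0 -> a = 0 by move=> a /eqP; rewrite normr_eq0 => /eqP.
  have h3 : `|0 : R| = 0 by rewrite normr0.
  have h4 : forall a : R, `|a| ^+ 2 = id (id a * a) by move=> a; rewrite (real_normK (num_real a)) expr2.
  have h10 : forall a b : R, id (id a * b) <= `|a| * `|b| by move=> a b; rewrite -normrM ler_norm.
  exact: (@main_claim R R id (fun x => `|x|) id id h1 h2 h3 h4 (fun _ _ => erefl) (fun _ => erefl)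
    (fun _ _ => erefl) (fun _ _ => erefl) (fun _ => erefl) h10 (fun _ _ => erefl) (fun _ => erefl) (fun _ _ => erefl)).
- exact: (@main_claim R R[i] (@conjc R) (@Normc.normc R) (@complex.Re R) (fun t => (t%:C)%C)
    (@c_ge0 R) (@Normc.eq0_normc R) (@Normc.normc0 R) (@c_md2 R) (@c_reD R) (@c_recj R)
    (@c_cjD R) (@c_cjM R) (@conjcK R) (@c_cs R) (@c_reI R) (@conjc_real R) (@c_IM R)).
Qed.
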